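(* Let $\mathcal{M}=(S,P,E,s_{init},L)$ be a CTMC with absorbing goal state $g$ and reward function $\rho\colon S\to\mathbb{R}_{>0}$ (all rewards positive). Let $\varepsilon,\delta\geq0$, let $s,s'\in S$ with $s\sim_{\varepsilon,\delta}s'$, let $r\geq0$, and let $\widehat{q}\geq\max_{p\in S}\widehat{E}(p)$ where $\widehat{E}(p)=E(p)/\rho(p)$. Then $$\left|\mathrm{Pr}_s(\lozenge_{\leq r}g)-\mathrm{Pr}_{s'}(\lozenge_{\leq r}g)\right|\leq 1-e^{-\widehat{q}\, r\,(e^{\delta}(\varepsilon+1)-1)}.$$
   Context: A CTMC $(S,P,E,s_{init},L)$: finite $S$, $P\colon S\to\mathrm{Distr}(S)$ ($P(s,A)=\sum_{a\in A}P(s,a)$), $E\colon S\to\mathbb{R}_{>0}$, initial state, labeling $L$. A timed path is $\sigma=s_0t_0s_1t_1\dots$ with $t_i>0$ the residence time in $s_i$ (exponential with rate $E(s_i)$, next state $s_{i+1}$ drawn with probability $P(s_i,s_{i+1})$). $\sigma@t=s_m$ for $m$ the smallest index with $t\leq\sum_{i=0}^{m}t_i$. The cumulative reward until time $t$ is $\rho(\sigma,t)=\sum_{j=0}^{m-1}t_j\rho(s_j)+(t-\sum_{j=0}^{m-1}t_j)\rho(s_m)$ where $\sigma@t=s_m$. $\mathrm{Pr}_s(\lozenge_{\leq r}g)$ is the probability that the CTMC started in $s$ reaches $g$ while having accumulated reward at most $r$. For $R\subseteq S\times S$, $R(A)=\{t\mid\exists a\in A:(a,t)\in R\}$. In the presence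 of rewards, a reflexive symmetric $R\subseteq S\times S$ is an $(\varepsilon,\delta)$-bisimulation if for all $(s,s')\in R$: $L(s)=L(s')$, $\rho(s)=\rho(s')$, $|\ln E(s)-\ln E(s')|\leq\delta$, and $P(s,A)\leq P(s',R(A))+\varepsilon$ for all $A\subseteq S$; $s\sim_{\varepsilon,\delta}s'$ if some such relation contains $(s,s')$. Standing assumption: $g$ is the unique goal state, absorbing and uniquely labeled. *)

(* Defs.v *)
From HB Require Import structures.
From mathcomp Require Import all_boot all_order all_algebra.
From mathcomp Require Import all_classical all_reals all_analysis.
Set Implicit Arguments. Unset Strict Implicit. Unset Printing Implicit Defensive.
Import Order.TTheory GRing.Theory Num.Theory.
Local Open Scope classical_set_scope.
Local Open Scope ring_scope.

Section CTMC.
Variables (R : realType) (S : finType).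

Definition Pset (P : S -> S -> R) (s : S) (A : {set S}) : R :=
  \sum_(a in A) P s a.

Definition is_distr_fun (P : S -> S -> R) : Prop :=
  (forall s t, 0 <= P s t) /\ (forall s, \sum_(t : S) P s t = 1).

Definition rel_image (Rl : rel S) (A : {set S}) : {set S} :=
  [set t | [exists a in A, Rl a t]].

Definition eps_delta_bisim {A : eqType} (P : S -> S -> R) (E : S -> R)
    (L : S -> A) (rho : S -> R) (eps delta : R) (Rl : rel S) : Prop :=
  (forall s, Rl s s) /\ (forall s s', Rl s s' -> Rl s' s) /\
  (forall s s', Rl s s' ->
     [/\ L s = L s', rho s = rho s',
         `| ln (E s) - ln (E s') | <= delta &
         forall B : {set S}, Pset P s B <= Pset P s' (rel_image Rl B) + eps]).

Definition eps_delta_bisimilar {A : eqType} (P : S -> S -> R) (E : S -> R)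
    (L : S -> A) (rho : S -> R) (eps delta : R) (s s' : S) : Prop :=
  exists Rl : rel S, eps_delta_bisim P E L rho eps delta Rl /\ Rl s s'.

(** Probability (from state s) of the event "the timed path reaches g within
    its first n jumps, having accumulated reward at most r upon entering g",
    i.e. exists j <= n, s_j = g and sum_{i<j} rho(s_i) t_i <= r.
    Computed over the finite-dimensional distribution of the first n
    (state, residence time) pairs: residence time in s ~ Exp(E s),
    successor drawn from P s. *)
Fixpoint reach_within (P : S -> S -> R) (E : S -> R) (rho : S -> R) (g : S)
    (n : nat) (s : S) (r : R) : \bar R :=
  match n with
  | 0 => (((s == g) && (0 <= r))%:R)%:E
  | n'.+1 =>
      if (s == g) && (0 <= r) then 1%E else
      (\int[@lebesgue_measure R]_(t in [set x : R | (0 < x)%R])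
         ((E s * expR (- (E s * t)))%:E *
          \sum_(s' : S) ((P s s')%:E * reach_within P E rho g n' s' (r - rho s * t))))%E
  end.

(** Pr_s(<>_{<= r} g): probability of the increasing union over n of the
    events above, i.e. the supremum of their probabilities. *)
Definition Pr_reach (P : S -> S -> R) (E : S -> R) (rho : S -> R) (g : S)
    (s : S) (r : R) : R :=
  fine (ereal_sup (range (fun n => reach_within P E rho g n s r))).

End CTMC.

(* Main.v *)
Require Import Defs.
From HB Require Import structures.
From mathcomp Require Import all_boot all_order all_algebra.
From mathcomp Require Import all_classical all_reals all_analysis.
From mathcomp Require Import measurable_realfun.
From mathcomp Require Import ring lra.
Import Order.TTheory GRing.Theory Num.Theory.
Set Implicit Arguments. Unset Strict Implicit.
Local Open Scope ring_scope.
Section Coupling.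
Variables (R : realType) (S : finType).

Lemma coupling_le (P : S -> S -> R) (Rl : rel S) (eps : R) (s s' : S) :
  (forall a b, 0 <= P a b) -> 0 <= eps ->
  (forall B : {set S}, Pset P s B <= Pset P s' (rel_image Rl B) + eps) ->
  forall n (F G : S -> R) (m : R), (#|[set v | (0 < F v)%R]| <= n)%N ->
  0 <= m ->
  (forall v, 0 <= F v <= m) -> (forall u, 0 <= G u) ->
  (forall v u, Rl v u -> F v <= G u) ->
  \sum_v P s v * F v <= \sum_u P s' u * G u + eps * m.
Proof.
move=> P0 eps0 HB n; elim: n => [|n IH] F G m Hc m0 HF HG HFG.
  have F0 v : F v = 0.
    move: Hc; rewrite leqn0 cards_eq0 => /eqP/setP/(_ v).
    rewrite !inE => /negbT; have /andP[+ _] := HF v.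
    by rewrite le_eqVlt => /orP[/eqP<- //|->].
  rewrite big1 ?add0r; last by move=> v _; rewrite F0 mulr0.
  apply: addr_ge0; last exact: mulr_ge0.
  by apply: sumr_ge0 => u _; apply: mulr_ge0.
set B := [set v | (0 < F v)%R].
have [B0|[v0 v0B]] := set_0Vmem B.
  apply: (IH F G m) => //; by rewrite -/B B0 cards0.
pose v1 := [arg min_(i < v0 | i \in B) F i]%O.
have [v1B v1min] : v1 \in B /\ forall j, j \in B -> F v1 <= F j.
  rewrite /v1; case: arg_minP => // i iB imin; split => //.
set mu := F v1.
have mu0 : 0 < mu by move: v1B; rewrite inE.
have Fout v : v \notin B -> F v = 0.
  rewrite inE => /negbTE Hv; have /andP[+ _] := HF v.
  by rewrite le_eqVlt => /orP[/eqP<- //|]; rewrite Hv.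
pose F2 v := if v \in B then F v - mu else 0.
pose RB := rel_image Rl B.
pose G2 u := if u \in RB then G u - mu else G u.
have HFe v : F v = F2 v + (if v \in B then mu else 0).
  by rewrite /F2; case: ifP => vB; [rewrite subrK | rewrite add0r Fout // vB].
have HG2 u : 0 <= G2 u.
  rewrite /G2; case: ifP => uRB; last exact: HG.
  move: uRB; rewrite inE => /existsP[a /andP[aB Rau]].
  by rewrite subr_ge0 (le_trans (v1min _ aB)) // HFG.
have HGe u : G u = G2 u + (if u \in RB then mu else 0).
  by rewrite /G2; case: ifP => _; [rewrite subrK | rewrite addr0].
have mum : mu <= m by have /andP[_ ->] := HF v1.
have IH2 := IH F2 G2 (m - mu).
have : \sum_v P s v * F2 v <= \sum_u P s' u * G2 u + eps * (m - mu).
  apply: IH2.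
  - have sub : [set v | 0 < F2 v] \subset B :\ v1.
      apply/fintype.subsetP => v; rewrite [v \in [set _ | _]]inE in_setD1 /F2.
      case: ifP => vB; last by rewrite ltxx.
      rewrite subr_gt0 => H; rewrite andbT; apply/eqP => ev.
      by move: H; rewrite ev /mu ltxx.
    rewrite -ltnS; apply: (leq_ltn_trans (subset_leq_card sub)).
    rewrite (cardsD1 v1 B) v1B /= add1n ltnS in Hc.
    by rewrite ltnS.
  - by rewrite subr_ge0.
  - move=> v; rewrite /F2; case: ifP => vB.
      have /andP[_ Hm] := HF v.
      by rewrite subr_ge0 v1min //= lerB.
    by rewrite lexx subr_ge0.
  - exact: HG2.
  - move=> v u Rvu; rewrite /F2 /G2; case: ifP => vB.
      have -> : u \in RB by rewrite inE; apply/existsP; exists v; rewrite vB.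
      by rewrite lerB // HFG.
    exact: HG2.
move=> H; rewrite (eq_bigr (fun v => P s v * F2 v + P s v * (if v \in B then mu else 0))); last first.
  by move=> v _; rewrite {1}HFe mulrDr.
rewrite [X in _ <= X + _](eq_bigr (fun u => P s' u * G2 u + P s' u * (if u \in RB then mu else 0))); last first.
  by move=> u _; rewrite {1}HGe mulrDr.
rewrite !big_split /=.
have E1 : \sum_v P s v * (if v \in B then mu else 0) = mu * Pset P s B.
  rewrite /Pset mulr_sumr [RHS]big_mkcond /=; apply: eq_bigr => v _.
  by case: ifP => _; rewrite ?mulr0 // mulrC.
have E2 : \sum_u P s' u * (if u \in RB then mu else 0) = mu * Pset P s' RB.
  rewrite /Pset mulr_sumr [RHS]big_mkcond /=; apply: eq_bigr => v _.
  by case: ifP => _; rewrite ?mulr0 // mulrC.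
rewrite E1 E2.
have HBm : mu * Pset P s B <= mu * Pset P s' RB + mu * eps.
  by rewrite -mulrDr ler_wpM2l // ?ltW // HB.
have : eps * m = eps * (m - mu) + mu * eps by rewrite mulrBr [mu * eps]mulrC subrK.
move=> ->. lra.
Qed.
End Coupling.

Section Integrals.
Variable R : realType.
Local Notation mu := (@lebesgue_measure R).
Local Open Scope classical_set_scope.

Lemma exp_trunc_int (c al T : R) : 0 <= c -> 0 < al -> 0 <= T ->
  (\int[mu]_(t in [set x : R | (0 < x)%R])
     ((c * (al * expR (- (al * t)))) * ((t <= T)%R)%:R)%:E
   = (c * (1 - expR (- (al * T))))%:E)%E.
Proof.
move=> c0 al0; rewrite le_eqVlt => /orP[/eqP T0|T0].
  subst T; rewrite mulr0 oppr0 expR0 subrr mulr0.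
  rewrite (eq_integral (cst 0%E)) ?integral0 // => t; rewrite inE /= => t0.
  by rewrite lt_geF // mulr0.
have mpdf : measurable_fun setT (fun t => (c * exponential_pdf al t)%:E).
  apply/measurable_EFinP; apply: measurable_funM; first exact: measurable_cst.
  exact: measurable_exponential_pdf.
transitivity (\int[mu]_(t in [set x : R | (0 < x)%R])
    (((fun t => (c * exponential_pdf al t)%:E) \_ [set t : R | (t <= T)%R]) t))%E.
  apply: eq_integral => /=.
  move=> t; rewrite inE /= => t0; rewrite patchE.
  have [tT|tT] := leP t T.
    by rewrite mem_set //= mulr1 exponential_pdfE ?ltW // mulNr.
  rewrite memNset /= ?mulr0 //; apply/negP; by rewrite -ltNge.
rewrite -integral_mkcondr.
have -> : [set x : R | (0 < x)%R] `&` [set t : R | (t <= T)%R] = `]0, T]%classic.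
  by apply/seteqP; split => x /=; rewrite in_itv /=; [move=> [-> ->] | move=> /andP[-> ->]].
rewrite integral_itv_obnd_cbnd; last exact: measurable_funS mpdf.
under eq_integral do rewrite EFinM.
rewrite ge0_integralZl_EFin //; last 2 first.
- by move=> x _; rewrite lee_fin exponential_pdf_ge0 // ltW.
- apply/measurable_EFinP; apply: measurable_funTS.
  exact: measurable_exponential_pdf.
have := exponential_prob_itv0c al T0; rewrite /exponential_prob => ->.
by rewrite mulNr EFinM EFinB.
Qed.

End Integrals.

Section Iexp.
Variable R : realType.
Local Notation mu := (@lebesgue_measure R).
Local Open Scope classical_set_scope.

Definition Dpos : set R := [set x : R | (0 < x)%R].

Definition goodH (H : R -> R) :=
  [/\ {homo H : x y / (x <= y)%R}, (forall y, 0 <= H y <= 1) &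
      (forall y, y < 0 -> H y = 0)].

Definition Iexp (a rh r : R) (H : R -> R) : \bar R :=
  (\int[mu]_(t in Dpos) ((a * expR (- (a * t)) * H (r - rh * t))%:E))%E.

Lemma mDpos : measurable Dpos.
Proof.
have -> : Dpos = `]0, +oo[%classic.
  by apply/seteqP; split => x; rewrite /= in_itv /= andbT.
exact: measurable_itv.
Qed.

Lemma meas_noninc (f : R -> R) :
  {homo f : x y / (x <= y)%R >-> (y <= x)%R} -> measurable_fun Dpos f.
Proof. by move=> hf; apply: nonincreasing_measurable => //; exact: mDpos. Qed.

Lemma mexpf a : 0 <= a -> measurable_fun Dpos (fun t => a * expR (- (a * t))).
Proof.
move=> a0; apply: meas_noninc => x y xy.
by rewrite ler_wpM2l // ler_expR lerN2 ler_wpM2l.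
Qed.

Lemma mHf (H : R -> R) r rh : {homo H : x y / (x <= y)%R} -> 0 <= rh ->
  measurable_fun Dpos (fun t => H (r - rh * t)).
Proof.
move=> Hh rh0; apply: meas_noninc => x y xy.
by apply: Hh; rewrite lerD2l lerN2 ler_wpM2l.
Qed.

Lemma mind T : measurable_fun Dpos (fun t : R => ((t <= T)%R)%:R : R).
Proof.
apply: meas_noninc => x y xy.
case: (leP y T) => yT; first by rewrite (le_trans xy yT).
by rewrite ler0n.
Qed.

Lemma Iexp_neg a rh r H : 0 < rh -> goodH H -> r < 0 -> Iexp a rh r H = 0%E.
Proof.
move=> rh0 [_ _ Hn] r0; rewrite /Iexp (eq_integral (cst 0%E)) ?integral0 // => t.
rewrite inE /= => t0; rewrite Hn ?mulr0 //.
have := mulr_gt0 rh0 t0; lra.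
Qed.

Lemma Iexp_bound a rh r H : 0 < a -> 0 < rh -> goodH H -> 0 <= r ->
  (0 <= Iexp a rh r H)%E /\ (Iexp a rh r H <= (1 - expR (- (a * (r / rh))))%:E)%E.
Proof.
move=> a0 rh0 [Hh H01 Hn] r0.
have H0 y : 0 <= H y by case/andP: (H01 y).
have H1 y : H y <= 1 by case/andP: (H01 y).
have A0 t : 0 <= a * expR (- (a * t)) by rewrite mulr_ge0 ?expR_ge0 ?ltW.
split.
  by apply: integral_ge0 => t _; rewrite lee_fin mulr_ge0.
have E := @exp_trunc_int R 1 a (r / rh) ler01 a0 (divr_ge0 r0 (ltW rh0)).
rewrite mul1r in E; rewrite -E.
rewrite /Iexp; apply: ge0_le_integral.
- exact: mDpos.
- by move=> t _; rewrite lee_fin mulr_ge0.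
- apply/measurable_EFinP; apply: measurable_funM; first exact: mexpf (ltW a0).
  exact: mHf (ltW rh0).
- apply/measurable_EFinP; apply: measurable_funM; last exact: mind.
  apply: measurable_funM; first exact: measurable_cst.
  exact: mexpf (ltW a0).
move=> t; rewrite /= => t0; rewrite lee_fin mul1r.
case: (leP t (r / rh)) => tT.
  by rewrite mulr1 -[X in _ <= X]mulr1 ler_wpM2l.
rewrite mulr0 Hn ?mulr0 //.
move: tT; rewrite ltr_pdivrMr // => tT.
rewrite subr_lt0 mulrC //.
Qed.

Lemma Iexp_mono a rh r1 r2 H : 0 < a -> 0 < rh -> goodH H -> r1 <= r2 ->
  (Iexp a rh r1 H <= Iexp a rh r2 H)%E.
Proof.
move=> a0 rh0 [Hh H01 Hn] r12.
have H0 y : 0 <= H y by case/andP: (H01 y).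
have A0 t : 0 <= a * expR (- (a * t)) by rewrite mulr_ge0 ?expR_ge0 ?ltW.
rewrite /Iexp; apply: ge0_le_integral.
- exact: mDpos.
- by move=> t _; rewrite lee_fin mulr_ge0.
- apply/measurable_EFinP; apply: measurable_funM; first exact: mexpf (ltW a0).
  exact: mHf (ltW rh0).
- apply/measurable_EFinP; apply: measurable_funM; first exact: mexpf (ltW a0).
  exact: mHf (ltW rh0).
move=> t _; rewrite lee_fin ler_wpM2l //.
by apply: Hh; rewrite lerD2r.
Qed.

End Iexp.

Section Cmp.
Variable R : realType.
Local Notation mu := (@lebesgue_measure R).
Local Open Scope classical_set_scope.

Lemma Iexp_fin (a rh r : R) (H : R -> R) : 0 < a -> 0 < rh -> goodH H ->
  Iexp a rh r H = (fine (Iexp a rh r H))%:E.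
Proof.
move=> a0 rh0 gH; have [r0|r0] := ltP r 0; first by rewrite Iexp_neg.
have [h0 h1] := Iexp_bound a0 rh0 gH r0.
by rewrite fineK // ge0_fin_numE // (le_lt_trans h1) // ltry.
Qed.

Lemma cmp_core (a b m M rh K eps r : R) (H H' : R -> R) :
  0 < a -> 0 < b -> 0 < rh -> goodH H -> goodH H' -> 0 <= r ->
  0 < m -> m <= a -> m <= b -> a <= M -> b <= M ->
  0 <= K -> K * rh < M -> M - K * rh <= (1 - eps) * m ->
  (forall y, 0 <= y -> H y <= H' y + 1 - (1 - eps) * expR (- (K * y))) ->
  fine (Iexp a rh r H) - fine (Iexp b rh r H') <= 1 - expR (- (K * r)).
Proof.
move=> a0 b0 rh0 gH gH' r0 m0 ma mb aM bM K0 KM kapfact Hrel.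
have gH_ := gH; have gH'_ := gH'.
case: gH_ => Hh H01 Hn; case: gH'_ => Hh' H01' Hn'.
have H0 y : 0 <= H y by case/andP: (H01 y).
have H1 y : H y <= 1 by case/andP: (H01 y).
have H0' y : 0 <= H' y by case/andP: (H01' y).
have [T hT] : exists T, T = r / rh by eexists.
have [K' hK'] : exists K', K' = K * rh by eexists.
have [al hal] : exists al, al = M - K' by eexists.
have T0 : 0 <= T by rewrite hT divr_ge0 // ltW.
have rT : r = rh * T by rewrite hT mulrC divfK // gt_eqF.
have KrT : K * r = K' * T by rewrite rT hK' mulrA.
have al0 : 0 < al by rewrite hal hK' subr_gt0.
have eps1 : 0 < 1 - eps.
  have : 0 < (1 - eps) * m by apply: lt_le_trans kapfact; rewrite subr_gt0.
  by rewrite pmulr_lgt0.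
have [be hbe] : exists be, be = ((1 - eps) * m) / al by eexists.
have be1 : 1 <= be by rewrite hbe ler_pdivlMr // mul1r hal hK'.
have beal : be * al = (1 - eps) * m by rewrite hbe divfK // gt_eqF.
pose eK := expR (- (K' * T)).
have [kap hkap] : exists kap, kap = be * eK by eexists.
have kap0 : 0 <= kap by rewrite hkap mulr_ge0 ?expR_ge0 // (le_trans ler01).
have A0 (c t : R) : 0 < c -> 0 <= c * expR (- (c * t)) by move=> c0; rewrite mulr_ge0 ?expR_ge0 ?ltW.
have pw : forall t, 0 < t ->
  (kap * (al * expR (- (al * t)))) * ((t <= T)%R)%:R +
    a * expR (- (a * t)) * H (r - rh * t) <=
  (1 * (a * expR (- (a * t)))) * ((t <= T)%R)%:R +
    b * expR (- (b * t)) * H' (r - rh * t).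
  move=> t t0; case: (leP t T) => tT; last first.
    have y0 : r - rh * t < 0.
      by rewrite rT -mulrBr pmulr_rlt0 // subr_lt0.
    by rewrite !mulr0 Hn // Hn' // !mulr0 addr0.
  rewrite !mulr1 mul1r.
  have y0 : 0 <= r - rh * t by rewrite rT -mulrBr mulr_ge0 // ?subr_ge0 // ltW.
  have Hy := Hrel _ y0.
  set y := r - rh * t in y0 Hy *.
  have ee : eK * expR (- (al * t)) = expR (- (M * t)) * expR (- (K * y)).
    rewrite -!expRD /eK /y hal; congr expR.
    rewrite mulrBr -KrT hK'; ring.
  have psi : kap * (al * expR (- (al * t))) =
      m * expR (- (M * t)) * ((1 - eps) * expR (- (K * y))).
    rewrite hkap mulrA -(mulrA be) (mulrC eK) mulrA beal -mulrA ee; ring.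
  rewrite psi.
  set w := m * expR (- (M * t)).
  set z := (1 - eps) * expR (- (K * y)) in Hy *.
  set A := a * expR (- (a * t)).
  set B := b * expR (- (b * t)).
  have w0 : 0 <= w by rewrite mulr_ge0 ?expR_ge0 // ltW.
  have wA : w <= A.
    rewrite /w /A; apply: ler_pM; [exact: ltW m0|exact: expR_ge0|exact: ma|].
    by rewrite ler_expR lerN2 ler_wpM2r // ltW.
  have wB : w <= B.
    rewrite /w /B; apply: ler_pM; [exact: ltW m0|exact: expR_ge0|exact: mb|].
    by rewrite ler_expR lerN2 ler_wpM2r // ltW.
  have p1 : 0 <= (A - w) * (1 - H y) by rewrite mulr_ge0 // subr_ge0.
  have p2 : 0 <= (B - w) * H' y by rewrite mulr_ge0 // subr_ge0.
  have p3 : 0 <= w * (H' y + 1 - z - H y) by rewrite mulr_ge0 //; lra.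
  nra.
have mps : measurable_fun (@Dpos R)
    (fun t => (kap * (al * expR (- (al * t)))) * ((t <= T)%R)%:R).
  apply: measurable_funM; last exact: mind.
  apply: measurable_funM; first exact: measurable_cst.
  exact: mexpf (ltW al0).
have mA1 : measurable_fun (@Dpos R)
    (fun t => (1 * (a * expR (- (a * t)))) * ((t <= T)%R)%:R).
  apply: measurable_funM; last exact: mind.
  apply: measurable_funM; first exact: measurable_cst.
  exact: mexpf (ltW a0).
have mAh : measurable_fun (@Dpos R) (fun t => a * expR (- (a * t)) * H (r - rh * t)).
  by apply: measurable_funM; [exact: mexpf (ltW a0)| exact: mHf (ltW rh0)].
have mBh : measurable_fun (@Dpos R) (fun t => b * expR (- (b * t)) * H' (r - rh * t)).
  by apply: measurable_funM; [exact: mexpf (ltW b0)| exact: mHf (ltW rh0)].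
have ps0 t : 0 <= (kap * (al * expR (- (al * t)))) * ((t <= T)%R)%:R.
  by rewrite mulr_ge0 ?ler0n // mulr_ge0 // A0.
have A10 t : 0 <= (1 * (a * expR (- (a * t)))) * ((t <= T)%R)%:R.
  by rewrite mulr_ge0 ?ler0n // mulr_ge0 // A0.
have Ah0 t : 0 <= a * expR (- (a * t)) * H (r - rh * t) by rewrite mulr_ge0 // A0.
have Bh0 t : 0 <= b * expR (- (b * t)) * H' (r - rh * t) by rewrite mulr_ge0 // A0.
have key : (\int[mu]_(t in @Dpos R) ((kap * (al * expR (- (al * t)))) * ((t <= T)%R)%:R +
    a * expR (- (a * t)) * H (r - rh * t))%:E <=
  \int[mu]_(t in @Dpos R) ((1 * (a * expR (- (a * t)))) * ((t <= T)%R)%:R +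
    b * expR (- (b * t)) * H' (r - rh * t))%:E)%E.
  apply: ge0_le_integral.
  - exact: mDpos.
  - by move=> t _; rewrite lee_fin addr_ge0.
  - by apply/measurable_EFinP; apply: measurable_funD.
  - by apply/measurable_EFinP; apply: measurable_funD.
  - by move=> t t0; rewrite lee_fin; apply: pw.
have eL : (\int[mu]_(t in @Dpos R) ((kap * (al * expR (- (al * t)))) * ((t <= T)%R)%:R +
    a * expR (- (a * t)) * H (r - rh * t))%:E =
    \int[mu]_(t in @Dpos R) ((kap * (al * expR (- (al * t)))) * ((t <= T)%R)%:R)%:E +
    \int[mu]_(t in @Dpos R) (a * expR (- (a * t)) * H (r - rh * t))%:E)%E.
  under eq_integral do rewrite EFinD.
  apply: ge0_integralD.
  - exact: mDpos.
  - by move=> t _; rewrite lee_fin.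
  - exact/measurable_EFinP.
  - by move=> t _; rewrite lee_fin.
  - exact/measurable_EFinP.
have eR : (\int[mu]_(t in @Dpos R) ((1 * (a * expR (- (a * t)))) * ((t <= T)%R)%:R +
    b * expR (- (b * t)) * H' (r - rh * t))%:E =
    \int[mu]_(t in @Dpos R) ((1 * (a * expR (- (a * t)))) * ((t <= T)%R)%:R)%:E +
    \int[mu]_(t in @Dpos R) (b * expR (- (b * t)) * H' (r - rh * t))%:E)%E.
  under eq_integral do rewrite EFinD.
  apply: ge0_integralD.
  - exact: mDpos.
  - by move=> t _; rewrite lee_fin.
  - exact/measurable_EFinP.
  - by move=> t _; rewrite lee_fin.
  - exact/measurable_EFinP.
rewrite eL eR in key.
have [va hva] : exists va, Iexp a rh r H = va%:E by eexists; exact: Iexp_fin.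
have [vb hvb] : exists vb, Iexp b rh r H' = vb%:E by eexists; exact: Iexp_fin.
rewrite hva hvb /=.
rewrite /Iexp /Dpos in hva hvb; rewrite /Dpos in key.
rewrite hva hvb (exp_trunc_int kap0 al0 T0) (exp_trunc_int ler01 a0 T0) in key.
rewrite -!EFinD lee_fin in key.
have eKM : eK * expR (- (al * T)) = expR (- (M * T)).
  by rewrite -expRD /eK hal hK'; congr expR; ring.
have eaM : expR (- (M * T)) <= expR (- (a * T)) by rewrite ler_expR lerN2 ler_wpM2r.
have eKM2 : expR (- (M * T)) <= eK.
  by rewrite /eK ler_expR lerN2 ler_wpM2r // hK' ltW.
have kapE : kap * (1 - expR (- (al * T))) = be * (eK - expR (- (M * T))).
  by rewrite hkap -eKM; ring.
have bX : eK - expR (- (M * T)) <= be * (eK - expR (- (M * T))).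
  by rewrite ler_peMl // subr_ge0.
rewrite kapE in key.
rewrite KrT -/eK.
move: key bX eaM; set P := be * _; set ea := expR _; set eM := expR (- (M * T)).
move=> key bX eaM; lra.
Qed.

End Cmp.

Lemma main_cmp (R : realType) (a b rh qh del eps r : R) (H H' : R -> R) :
  0 < a -> 0 < b -> 0 < rh -> goodH H -> goodH H' -> 0 <= r -> 0 <= eps ->
  0 <= del -> `|ln a - ln b| <= del -> a / rh <= qh -> b / rh <= qh ->
  (forall y, 0 <= y -> H y <= H' y + 1 -
      (1 - eps) * expR (- (qh * (expR del * (eps + 1) - 1) * y))) ->
  fine (Iexp a rh r H) - fine (Iexp b rh r H') <=
    1 - expR (- (qh * (expR del * (eps + 1) - 1) * r)).
Proof.
move=> a0 b0 rh0 gH gH' r0 eps0 del0 hln haq hbq Hrel.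
set e := expR del.
set X := e * (eps + 1) - 1.
set K := qh * X.
have e1 : 1 <= e by have := expR_ge1Dx del; rewrite /e; lra.
have X0 : 0 <= X by rewrite /X subr_ge0; nra.
have qh0 : 0 < qh by apply: lt_le_trans haq; rewrite divr_gt0.
have K0 : 0 <= K by rewrite mulr_ge0 // ltW.
have [Ka|Ka] := leP a (K * rh).
  have [h0 h1] := Iexp_bound a0 rh0 gH r0.
  have [h0' _] := Iexp_bound b0 rh0 gH' r0.
  have ea := Iexp_fin r a0 rh0 gH.
  have eb := Iexp_fin r b0 rh0 gH'.
  rewrite ea in h0 h1; rewrite eb in h0'.
  rewrite lee_fin in h0; rewrite lee_fin in h1; rewrite lee_fin in h0'.
  have aK : a / rh <= K by rewrite ler_pdivrMr.
  have hexp : expR (- (K * r)) <= expR (- (a * (r / rh))).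
    rewrite ler_expR lerN2 mulrA mulrAC; exact: ler_wpM2r.
  lra.
have [m [M [m0 [ma [mb [aM [bM [Mm Mq]]]]]]]] : exists m M, 0 < m /\ m <= a /\
    m <= b /\ a <= M /\ b <= M /\ M <= m * e /\ M / rh <= qh.
  move: hln; rewrite ler_norml => /andP[hl1 hl2].
  case: (leP a b) => ab.
    exists a, b; split; first done; split; first done; split; first done.
    split; first done; split; first done; split; last done.
    have -> : a * e = expR (ln a + del) by rewrite expRD lnK // posrE.
    rewrite -[X in X <= _]lnK ?posrE // ler_expR; lra.
  exists b, a; split; first done; split; first exact: ltW.
  split; first done; split; first done; split; first exact: ltW.
  split; last done.
  have -> : b * e = expR (ln b + del) by rewrite expRD lnK // posrE.
  rewrite -[X in X <= _]lnK ?posrE // ler_expR; lra.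
have M0 : 0 < M by apply: lt_le_trans aM.
have KM : K * rh < M by apply: lt_le_trans aM.
have MqR : M <= qh * rh by rewrite -ler_pdivrMr.
have h1 : M * X <= K * rh by rewrite /K mulrAC ler_wpM2r.
have h2 : X < 1.
  have : M * X < M * 1 by rewrite mulr1; apply: le_lt_trans KM.
  by rewrite ltr_pM2l.
have q0 : 0 < 2 - e * (eps + 1) by move: h2; rewrite /X; lra.
have h3 : M * (2 - e * (eps + 1)) <= m * e * (2 - e * (eps + 1)).
  by rewrite ler_wpM2r // ltW.
have h4 : e * (2 - e * (eps + 1)) <= 1 - eps.
  have : 0 <= (e - 1) ^+ 2 by apply: sqr_ge0.
  have : 0 <= eps * (e * e - 1) by rewrite mulr_ge0 //; nra.
  nra.
have h5 : m * (e * (2 - e * (eps + 1))) <= m * (1 - eps) by rewrite ler_wpM2l // ltW.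
have kapfact : M - K * rh <= (1 - eps) * m.
  have E1 : M - M * X = M * (2 - e * (eps + 1)) by rewrite /X; ring.
  have E2 : m * e * (2 - e * (eps + 1)) = m * (e * (2 - e * (eps + 1))) by ring.
  have : M - K * rh <= M - M * X by lra.
  rewrite E1 => h6.
  rewrite E2 in h3; have := le_trans h3 h5; move: h6; lra.
exact: (cmp_core a0 b0 rh0 gH gH' r0 m0 ma mb aM bM K0 KM kapfact Hrel).
Qed.

Lemma sup_diff (R : realType) (u v : nat -> R) (c : R) :
  (forall n, 0 <= u n <= 1) -> (forall n, 0 <= v n <= 1) ->
  (forall n, u n - v n <= c) ->
  fine (ereal_sup (range (fun n => (u n)%:E))) -
    fine (ereal_sup (range (fun n => (v n)%:E))) <= c.
Proof.
have supfin (w : nat -> R) : (forall n, 0 <= w n <= 1) -> exists sw,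
    ereal_sup (range (fun n => (w n)%:E)) = sw%:E /\ (forall n, w n <= sw) /\
    (forall z, (forall n, w n <= z) -> sw <= z).
  move=> hw; set Sw := ereal_sup _.
  have lb : ((w 0%N)%:E <= Sw)%E by apply: ereal_sup_ubound; exists 0%N.
  have ub : (Sw <= 1%:E)%E.
    by apply: ge_ereal_sup => _ [n _ <-]; rewrite lee_fin; case/andP: (hw n).
  have fin : Sw \is a fin_num.
    rewrite ge0_fin_numE ?(le_lt_trans ub) ?ltry //.
    by apply: le_trans lb; rewrite lee_fin; case/andP: (hw 0%N).
  exists (fine Sw); split; first by rewrite fineK.
  split.
    by move=> n; rewrite -lee_fin fineK //; apply: ereal_sup_ubound; exists n.
  move=> z hz; rewrite -lee_fin fineK //; apply: ge_ereal_sup => _ [n _ <-].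
  by rewrite lee_fin.
move=> hu hv huv.
have [su [-> [_ su2]]] := supfin u hu.
have [sv [-> [sv1 _]]] := supfin v hv.
rewrite /=.
have : su <= sv + c by apply: su2 => n; have := huv n; have := sv1 n; lra.
lra.
Qed.

Section Main.
Variables (R : realType) (S : finType) (A : eqType) (P : S -> S -> R)
  (E : S -> R) (L : S -> A) (rho : S -> R) (g : S).
Hypotheses (HP : is_distr_fun P) (HE : forall p, 0 < E p)
  (Hrho : forall p, 0 < rho p) (Hg_lab : forall p, L p = L g -> p = g).

Local Notation rw := (reach_within P E rho g).

Definition vn n u x := fine (rw n u x).
Definition Hf n u y := \sum_(w : S) P u w * vn n w y.
Definition Inv n := forall u, (forall x, rw n u x = (vn n u x)%:E) /\ goodH (vn n u).

Lemma Hf_good n : Inv n -> forall u, goodH (Hf n u).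
Proof.
move=> Hn u; have [P0 P1] := HP.
have G w := proj2 (Hn w).
split.
- move=> x y xy; apply: ler_sum => w _; apply: ler_wpM2l => //.
  by case: (G w) => h _ _; apply: h.
- move=> y; apply/andP; split.
    apply: sumr_ge0 => w _; apply: mulr_ge0 => //.
    by case: (G w) => _ h _; case/andP: (h y).
  rewrite -(P1 u); apply: ler_sum => w _; rewrite -[X in _ <= X]mulr1.
  apply: ler_wpM2l => //; by case: (G w) => _ h _; case/andP: (h y).
- move=> y y0; apply: big1 => w _.
  by case: (G w) => _ _ h; rewrite h ?mulr0.
Qed.

Lemma reach_succ n : Inv n -> forall u x,
  rw n.+1 u x = if (u == g) && (0 <= x) then 1%E
                else Iexp (E u) (rho u) x (Hf n u).
Proof.
move=> Hn u x /=; case: ifP => // _.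
rewrite /Iexp; apply: eq_integral => t _.
under eq_bigr do rewrite (proj1 (Hn _)) -EFinM.
by rewrite sumEFin -EFinM.
Qed.

Lemma Inv_all n : Inv n.
Proof.
elim: n => [|n IH].
  move=> u; split; first by move=> x.
  rewrite /vn /=; split.
  - move=> x y xy; case: (u == g) => //=.
    have [x0|x0] := leP 0 x; last by rewrite ler0n.
    by rewrite (le_trans x0 xy).
  - by move=> y; case: ((u == g) && (0 <= y)); rewrite /= ?lexx ?ler01 ?ler0n.
  - by move=> y y0; rewrite leNgt y0 andbF.
move=> u; have Hs := reach_succ IH u.
have gH := Hf_good IH u.
have vE x : vn n.+1 u x = if (u == g) && (0 <= x) then 1
    else fine (Iexp (E u) (rho u) x (Hf n u)).
  by rewrite /vn Hs; case: ifP.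
have fE x := Iexp_fin x (HE u) (Hrho u) gH.
have b01 x : 0 <= fine (Iexp (E u) (rho u) x (Hf n u)) <= 1.
  have [x0|x0] := ltP x 0; first by rewrite Iexp_neg //= lexx ler01.
  have [h0 h1] := Iexp_bound (HE u) (Hrho u) gH x0.
  rewrite fE in h0 h1; rewrite lee_fin in h0; rewrite lee_fin in h1.
  rewrite h0 /=; apply: le_trans h1 _.
  by rewrite lerBlDr lerDl expR_ge0.
split.
  by move=> x; rewrite vE Hs; case: ifP.
split.
- move=> x y xy; rewrite !vE.
  case: ifP => hx.
    have -> : (u == g) && (0 <= y).
      by case/andP: hx => -> x0; rewrite (le_trans x0 xy).
    done.
  case: ifP => hy; first by case/andP: (b01 x).
  have := Iexp_mono (HE u) (Hrho u) gH xy.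
  by rewrite (fE x) (fE y) lee_fin.
- by move=> y; rewrite vE; case: ifP => _; [rewrite ler01 lexx | exact: b01].
- by move=> y y0; rewrite vE leNgt y0 andbF Iexp_neg.
Qed.

Variables (Rl : rel S) (eps del qhat : R).
Hypotheses (Hbis : eps_delta_bisim P E L rho eps del Rl) (Heps : 0 <= eps)
  (Hdel : 0 <= del) (Hq : forall p, E p / rho p <= qhat).

Local Notation K := (qhat * (expR del * (eps + 1) - 1)).

Lemma K_ge0 : 0 <= K.
Proof.
have qh0 : 0 < qhat by apply: lt_le_trans (Hq g); rewrite divr_gt0.
have e1 : 1 <= expR del by rewrite -expR0 ler_expR.
have h : 0 <= (expR del - 1) * (eps + 1).
  by apply: mulr_ge0; [rewrite subr_ge0 | apply: addr_ge0].
have Heps0 := Heps.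
apply: mulr_ge0; first exact: ltW.
rewrite subr_ge0; lra.
Qed.

Lemma Rl_g s s' : Rl s s' -> (s == g) = (s' == g).
Proof.
move=> Rss'; have [_ [_ H]] := Hbis; case: (H s s' Rss') => HL _ _ _.
apply/idP/idP => /eqP e.
  by subst s; rewrite (Hg_lab (esym HL)).
by subst s'; rewrite (Hg_lab HL).
Qed.

Lemma diff_bound n : forall s s', Rl s s' -> forall x, 0 <= x ->
  vn n s x - vn n s' x <= 1 - expR (- (K * x)).
Proof.
have K0 := K_ge0.
have Kb x : 0 <= x -> 0 <= 1 - expR (- (K * x)).
  by move=> x0; rewrite subr_ge0 expR_le1 oppr_le0 mulr_ge0.
elim: n => [|n IH] s s' Rss' x x0.
  by rewrite /vn /= (Rl_g Rss') subrr Kb.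
have I := Inv_all n.
rewrite /vn !(reach_succ I) (Rl_g Rss').
case: ifP => hg; first by rewrite /= subrr Kb.
have [_ [_ H]] := Hbis; case: (H s s' Rss') => HL Hrh Hln HB.
rewrite -Hrh.
have [P0 P1] := HP.
apply: main_cmp => //.
- exact: Hf_good.
- exact: Hf_good.
- by rewrite Hrh.
move=> y y0.
set c := 1 - expR (- (K * y)).
have G w := proj2 (I w).
have v01 w : 0 <= vn n w y <= 1 by case: (G w) => _ h _; apply: h.
have Hc' := @coupling_le _ _ P Rl eps s s' P0 Heps HB #|S|
  (fun v => Num.max (vn n v y - c) 0) (fun u => vn n u y)
  (expR (- (K * y))) (max_card _) (expR_ge0 _).
have : \sum_v P s v * Num.max (vn n v y - c) 0 <=
    \sum_u P s' u * vn n u y + eps * expR (- (K * y)).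
  apply: Hc'.
  - move=> v; rewrite le_max lexx orbT /= ge_max expR_ge0 andbT.
    by case/andP: (v01 v) => _ h; rewrite /c; lra.
  - by move=> u; case/andP: (v01 u).
  - move=> v u Rvu; rewrite ge_max; case/andP: (v01 u) => -> _; rewrite andbT.
    by have := IH v u Rvu y y0; rewrite /c; lra.
move=> Hsum.
have Hle : Hf n s y <= \sum_v P s v * Num.max (vn n v y - c) 0 + c.
  rewrite /Hf -[X in _ + X]mul1r -(P1 s) mulr_suml -big_split /=.
  apply: ler_sum => v _; rewrite -mulrDr ler_wpM2l //.
  by rewrite -lerBlDr le_max lexx.
rewrite /Hf in Hle *; rewrite /c in Hle Hsum; lra.
Qed.

Lemma final_bound s s' r : Rl s s' -> 0 <= r ->
  `|Pr_reach P E rho g s r - Pr_reach P E rho g s' r| <= 1 - expR (- (K * r)).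
Proof.
move=> Rss' r0; rewrite /Pr_reach.
have ext u : (fun n => rw n u r) = (fun n => (vn n u r)%:E).
  by apply: boolp.funext => n; case: (Inv_all n u) => ->.
rewrite !ext.
have b01 u n : 0 <= vn n u r <= 1 by case: (proj2 (Inv_all n u)) => _ h _; apply: h.
have [_ [Hsym _]] := Hbis.
rewrite ler_norml; apply/andP; split.
  rewrite lerNl opprB; apply: sup_diff => // n.
  exact: diff_bound (Hsym _ _ Rss') _ r0.
apply: sup_diff => // n; exact: diff_bound Rss' _ r0.
Qed.

End Main.

Theorem proposition9 (R : realType) (S : finType) (A : eqType)
    (P : S -> S -> R) (E : S -> R) (s_init : S) (L : S -> A)
    (rho : S -> R) (g : S)
    (HP : is_distr_fun P)
    (HE : forall p, 0 < E p)
    (Hrho : forall p, 0 < rho p)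
    (Hg_abs : P g g = 1)
    (Hg_lab : forall p, L p = L g -> p = g)
    (eps delta : R) (Heps : 0 <= eps) (Hdelta : 0 <= delta)
    (s s' : S) (Hbis : eps_delta_bisimilar P E L rho eps delta s s')
    (r : R) (Hr : 0 <= r)
    (qhat : R) (Hqhat : forall p, E p / rho p <= qhat) :
  `| Pr_reach P E rho g s r - Pr_reach P E rho g s' r |
    <= 1 - expR (- (qhat * r * (expR delta * (eps + 1) - 1))).
Proof.
move: Hbis => [Rl [Hb Rss']].
have H := final_bound HP HE Hrho Hg_lab Hb Heps Hdelta Hqhat Rss' Hr.
by rewrite mulrAC.
Qed.
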